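(* Let $n\in\mathbb{N}$ be fixed, let $f:[0,1]\times\mathbb{R}^2\to\mathbb{R}$ be continuous with $f(t,0,0)=0$ for all $t\in[0,1]$ and satisfying condition (P2) below, and let $h:[0,1]\to\mathbb{R}$ be continuous with $h(0)=h(1)=0$. Then the discrete boundary value problem $$-\Delta^2x(k-1)+\frac1{n^2}f\!\left(\frac kn,\,n\Delta x(k-1),\,x(k)\right)=\frac1{n^2}h\!\left(\frac kn\right),\qquad x(0)=x(n)=0,$$ has exactly one solution $x\in\mathbb{E}$ (in the weak sense described in the context).
   Context: Condition (P2): for all $s,t,w,z\in\mathbb{R}$ and all $k,l\in[0,1]$, $(s-t)\big(f(k,w,s)-f(l,z,t)\big)\ge 0$. $\Delta x(k)=x(k+1)-x(k)$, $\Delta^2x(k)=\Delta(\Delta x)(k)=x(k+2)-2x(k+1)+x(k)$. $\mathbb{E}=\{x:\{0,1,\dots,n\}\to\mathbb{R}\ :\ x(0)=x(n)=0\}$, an $n$-dimensional... (more precisely $(n-1)$-dimensional) real Hilbert space with inner product $\langle x,y\rangle_{\mathbb{E}}=\sum_{k=1}^n\Delta x(k-1)\Delta y(k-1)$. A solution of the discrete problem is an $x\in\mathbb{E}$ such that for all $y\in\mathbb{E}$: $$\sum_{k=1}^n\Delta x(k-1)\Delta y(k-1)+\frac1{n^2}\sum_{k=1}^n y(k)f\!\left(\frac kn,n\Delta x(k-1),x(k)\right)=\frac1{n^2}\sum_{k=1}^n y(k)h\!\left(\frac kn\right).$$ *)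

(* Defs.v *)
From Stdlib Require Import Reals Lra Lia.
Open Scope R_scope.

Definition Delta (x : nat -> R) (k : nat) : R := x (S k) - x k.

Fixpoint sum_1_to (g : nat -> R) (n : nat) : R :=
  match n with
  | O => 0
  | S m => sum_1_to g m + g (S m)
  end.

(* Membership in E: x(0) = x(n) = 0 (only the values on {0,...,n} matter). *)
Definition inE (n : nat) (x : nat -> R) : Prop := x 0%nat = 0 /\ x n = 0.

Definition continuous_on_I_R2 (f : R -> R -> R -> R) : Prop :=
  forall t w s, 0 <= t <= 1 ->
  forall eps, 0 < eps -> exists delta, 0 < delta /\
    forall t' w' s', 0 <= t' <= 1 ->
      Rabs (t' - t) < delta -> Rabs (w' - w) < delta -> Rabs (s' - s) < delta ->
      Rabs (f t' w' s' - f t w s) < eps.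

Definition continuous_on_I (h : R -> R) : Prop :=
  forall t, 0 <= t <= 1 ->
  forall eps, 0 < eps -> exists delta, 0 < delta /\
    forall t', 0 <= t' <= 1 -> Rabs (t' - t) < delta -> Rabs (h t' - h t) < eps.

Definition P2 (f : R -> R -> R -> R) : Prop :=
  forall s t w z k l, 0 <= k <= 1 -> 0 <= l <= 1 ->
    (s - t) * (f k w s - f l z t) >= 0.

(* Weak solution of the discrete BVP. *)
Definition is_solution (n : nat) (f : R -> R -> R -> R) (h : R -> R)
    (x : nat -> R) : Prop :=
  inE n x /\
  forall y : nat -> R, inE n y ->
    sum_1_to (fun k => Delta x (k - 1) * Delta y (k - 1)) n
    + / (INR n ^ 2) * sum_1_to (fun k =>
          y k * f (INR k / INR n) (INR n * Delta x (k - 1)) (x k)) n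
    = / (INR n ^ 2) * sum_1_to (fun k => y k * h (INR k / INR n)) n.

(* Main.v *)
Require Import Defs.
From Stdlib Require Import Reals Lra Lia.
Require Import Defs.
Open Scope R_scope.

Lemma cont_plus f1 f2 : continuity f1 -> continuity f2 -> continuity (fun x => f1 x + f2 x). Proof. exact (continuity_plus f1 f2). Qed.
Lemma cont_minus f1 f2 : continuity f1 -> continuity f2 -> continuity (fun x => f1 x - f2 x). Proof. exact (continuity_minus f1 f2). Qed.
Lemma cont_scal f c : continuity f -> continuity (fun x => c * f x). Proof. exact (fun H => continuity_scal f c H). Qed.
Lemma cont_comp f g : continuity f -> continuity g -> continuity (fun x => g (f x)). Proof. exact (continuity_comp f g). Qed.
Lemma cont_const c : continuity (fun _ => c). Proof. apply continuity_const. intros x y; reflexivity. Qed.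
Lemma cont_id : continuity (fun x => x). Proof. apply derivable_continuous, derivable_id. Qed.

Lemma sum_ext g1 g2 m : (forall k, (1 <= k <= m)%nat -> g1 k = g2 k) ->
  sum_1_to g1 m = sum_1_to g2 m.
Proof.
  induction m; intros H; simpl; auto.
  rewrite IHm by (intros; apply H; lia). rewrite H by lia. reflexivity.
Qed.

Lemma sum_comb a1 a2 a3 c m :
  sum_1_to (fun k => a1 k + c * a2 k - c * a3 k) m =
  sum_1_to a1 m + c * sum_1_to a2 m - c * sum_1_to a3 m.
Proof. induction m; simpl. ring. rewrite IHm. ring. Qed.

Lemma sum_zero g m : (forall k, (1 <= k <= m)%nat -> g k = 0) -> sum_1_to g m = 0.
Proof.
  induction m; intros H; simpl; auto.
  rewrite IHm by (intros; apply H; lia). rewrite H by lia. ring.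
Qed.

Lemma sum_delta r j m : (1 <= j <= m)%nat ->
  sum_1_to (fun k => (if Nat.eqb k j then 1 else 0) * r k) m = r j.
Proof.
  induction m; intros Hj; [lia|]. cbn [sum_1_to].
  destruct (Nat.eq_dec j (S m)) as [->|Hne].
  - rewrite sum_zero. rewrite Nat.eqb_refl. ring.
    intros k Hk. destruct (Nat.eqb_spec k (S m)); [lia|apply Rmult_0_l].
  - rewrite IHm by lia. destruct (Nat.eqb_spec (S m) j); [lia|]. rewrite Rmult_0_l, Rplus_0_r. reflexivity.
Qed.

Lemma sbp (x y : nat -> R) (m : nat) :
  sum_1_to (fun k => Delta x (k - 1) * Delta y (k - 1)) m =
  sum_1_to (fun k => y k * (Delta x (k - 1) - Delta x k)) m
  + y m * Delta x m - y 0%nat * Delta x 0%nat.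
Proof.
  induction m; cbn [sum_1_to]. { ring. }
  rewrite IHm. replace (S m - 1)%nat with m by lia. unfold Delta. ring.
Qed.

Definition res (n : nat) (f : R -> R -> R -> R) (h : R -> R) (x : nat -> R) (k : nat) : R :=
  (Delta x (k - 1) - Delta x k) + / (INR n ^ 2) *
  (f (INR k / INR n) (INR n * Delta x (k - 1)) (x k) - h (INR k / INR n)).

Lemma weak_iff n f h x : is_solution n f h x <->
  inE n x /\ forall y, inE n y -> sum_1_to (fun k => y k * res n f h x k) n = 0.
Proof.
  assert (Key : forall y, inE n y ->
    sum_1_to (fun k => y k * res n f h x k) n =
    sum_1_to (fun k => Delta x (k - 1) * Delta y (k - 1)) n
    + / (INR n ^ 2) * sum_1_to (fun k =>
          y k * f (INR k / INR n) (INR n * Delta x (k - 1)) (x k)) n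
    - / (INR n ^ 2) * sum_1_to (fun k => y k * h (INR k / INR n)) n).
  { intros y [Hy0 Hyn]. rewrite sbp, Hy0, Hyn.
    rewrite (sum_ext _ (fun k => y k * (Delta x (k - 1) - Delta x k)
       + / (INR n ^ 2) * (y k * f (INR k / INR n) (INR n * Delta x (k - 1)) (x k))
       - / (INR n ^ 2) * (y k * h (INR k / INR n)))).
    2: { intros k _. unfold res. ring. }
    rewrite sum_comb. ring. }
  split.
  - intros [HE Hw]. split; auto. intros y Hy. rewrite Key by auto. rewrite Hw by auto. ring.
  - intros [HE Hw]. split; auto. intros y Hy. specialize (Key y Hy).
    rewrite Hw in Key by auto. lra.
Qed.

(* f does not depend on its first two arguments *)
Lemma f_ge (f : R -> R -> R -> R) (Hfc : continuous_on_I_R2 f) (HP2 : P2 f) :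
  forall k w l z s, 0 <= k <= 1 -> 0 <= l <= 1 -> f k w s >= f l z s.
Proof.
  intros k w l z s Hk Hl.
  destruct (Rle_lt_dec (f l z s) (f k w s)) as [Hle|Hlt]; [lra|].
  exfalso.
  destruct (Hfc l z s Hl ((f l z s - f k w s) / 2)) as [d [Hd Hc]]; [lra|].
  specialize (Hc l z (s - d / 2) Hl).
  assert (E1 : Rabs (f l z (s - d / 2) - f l z s) < (f l z s - f k w s) / 2).
  { apply Hc; rewrite ?Rminus_diag, ?Rabs_R0; try lra.
    replace (s - d / 2 - s) with (- (d / 2)) by ring. rewrite Rabs_Ropp, Rabs_right; lra. }
  specialize (HP2 s (s - d / 2) w z k l Hk Hl).
  replace (s - (s - d / 2)) with (d / 2) in HP2 by ring.
  apply Rabs_def2 in E1. destruct E1.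
  assert (f k w s - f l z (s - d / 2) >= 0).
  { destruct (Rle_lt_dec 0 (f k w s - f l z (s - d / 2))); [lra|].
    exfalso. assert (d / 2 * (f k w s - f l z (s - d / 2)) < 0).
    { apply Rmult_pos_neg; lra. } lra. }
  lra.
Qed.

Lemma f_indep f (Hfc : continuous_on_I_R2 f) (HP2 : P2 f) :
  forall t w s, 0 <= t <= 1 -> f t w s = f 0 0 s.
Proof.
  intros. pose proof (f_ge f Hfc HP2 t w 0 0 s H ltac:(lra)).
  pose proof (f_ge f Hfc HP2 0 0 t w s ltac:(lra) H). lra.
Qed.

Lemma g_mono f (HP2 : P2 f) : forall s t, t <= s -> f 0 0 t <= f 0 0 s.
Proof.
  intros s t Hst. destruct (Req_dec s t) as [->|Hne]; [lra|].
  specialize (HP2 s t 0 0 0 0 ltac:(lra) ltac:(lra)).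
  destruct (Rle_lt_dec (f 0 0 t) (f 0 0 s)); auto.
  assert ((s - t) * (f 0 0 s - f 0 0 t) < 0) by (apply Rmult_pos_neg; lra). lra.
Qed.

Lemma g_cont f (Hfc : continuous_on_I_R2 f) : continuity (fun s => f 0 0 s).
Proof.
  intros s. unfold continuity_pt, continue_in, limit1_in, limit_in. simpl. unfold R_dist.
  intros eps Heps. destruct (Hfc 0 0 s ltac:(lra) eps Heps) as [d [Hd Hc]].
  exists d. split; [lra|]. intros s' [_ Hs']. apply Hc; auto; try lra;
  rewrite Rminus_diag, Rabs_R0; lra.
Qed.

(* shooting *)
Definition hh (n : nat) (h : R -> R) (j : nat) := h (INR j / INR n).

Fixpoint P (n : nat) (g h : R -> R) (a : R) (k : nat) : R * R :=
  match k with
  | O => (0, a)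
  | S m => (snd (P n g h a m),
            2 * snd (P n g h a m) - fst (P n g h a m)
            + / (INR n ^ 2) * (g (snd (P n g h a m)) - hh n h (S m)))
  end.

Definition X n g h a k := fst (P n g h a k).

Lemma X_SS n g h a k : X n g h a (S (S k)) =
  2 * X n g h a (S k) - X n g h a k + / (INR n ^ 2) * (g (X n g h a (S k)) - hh n h (S k)).
Proof. reflexivity. Qed.

Lemma X_cont n g h (Hg : continuity g) : forall k,
  continuity (fun a => fst (P n g h a k)) /\ continuity (fun a => snd (P n g h a k)).
Proof.
  induction k as [|k [IH1 IH2]]; simpl.
  - split; [apply cont_const | apply cont_id].
  - split; auto.
    apply cont_plus; [apply cont_minus; [apply cont_scal; auto| auto]|].
    apply cont_scal. apply cont_minus; [apply (cont_comp _ g); auto | apply cont_const].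
Qed.

Lemma X_mono n g h (Hn : (0 < n)%nat) (Hg : forall s t, t <= s -> g t <= g s) a b : a < b ->
  forall k, X n g h b (S k) - X n g h a (S k) - (X n g h b k - X n g h a k) >= b - a
        /\ X n g h b k - X n g h a k >= INR k * (b - a).
Proof.
  intros Hab. assert (Hc : 0 < / (INR n ^ 2)).
  { apply Rinv_0_lt_compat. apply pow_lt. apply lt_0_INR. auto. }
  induction k as [|k [IH1 IH2]].
  - unfold X; simpl. split; lra.
  - rewrite !X_SS. rewrite S_INR. split; [|lra].
    assert (X n g h a (S k) <= X n g h b (S k)).
    { assert (INR k * (b - a) >= 0). { apply Rle_ge, Rmult_le_pos; [apply pos_INR|lra]. } lra. }
    pose proof (Hg _ _ H).
    assert (/ (INR n ^ 2) * (g (X n g h b (S k)) - g (X n g h a (S k))) >= 0).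
    { apply Rle_ge, Rmult_le_pos; lra. }
    lra.
Qed.

Theorem mainTheorem2 (n : nat) (hn : (0 < n)%nat)
  (f : R -> R -> R -> R) (h : R -> R)
  (Hfc : continuous_on_I_R2 f)
  (Hf0 : forall t, 0 <= t <= 1 -> f t 0 0 = 0)
  (HP2 : P2 f)
  (Hhc : continuous_on_I h)
  (Hh0 : h 0 = 0) (Hh1 : h 1 = 0) :
  exists x : nat -> R, is_solution n f h x /\
    forall x' : nat -> R, is_solution n f h x' ->
      forall k : nat, (k <= n)%nat -> x' k = x k.
Proof.
  set (g := fun s => f 0 0 s).
  assert (Hgm : forall s t, t <= s -> g t <= g s) by (apply g_mono; auto).
  assert (Hgc : continuity g) by (apply g_cont; auto).
  assert (Hfi : forall k w s, (k <= n)%nat -> f (INR k / INR n) w s = g s).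
  { intros k w s Hk. apply f_indep; auto.
    assert (0 < INR n) by (apply lt_0_INR; auto).
    assert (INR k <= INR n) by (apply le_INR; auto).
    split. apply Rmult_le_pos; [apply pos_INR| left; apply Rinv_0_lt_compat; auto].
    apply (Rmult_le_reg_r (INR n)); auto. unfold Rdiv. rewrite Rmult_assoc, Rinv_l; lra. }
  assert (HnR : 1 <= INR n) by (apply (le_INR 1); lia).
  assert (Hmono : forall a b, a < b -> X n g h b n - X n g h a n >= INR n * (b - a)).
  { intros a b Hab. apply (X_mono n g h hn Hgm a b Hab n). }
  assert (Hres : forall a k, (1 <= k <= n - 1)%nat -> res n f h (X n g h a) k = 0).
  { intros a k Hk. destruct k as [|k]; [lia|].
    unfold res, Delta. replace (S k - 1)%nat with k by lia. rewrite Hfi by lia.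
    rewrite X_SS. unfold hh. ring. }
  set (F := fun a => X n g h a n).
  assert (HFc : continuity F).
  { unfold F, X. apply (X_cont n g h Hgc n). }
  set (M := Rabs (F 0) + 1).
  assert (HM : 0 < M) by (unfold M; pose proof (Rabs_pos (F 0)); lra).
  assert (Hlo : F (- M) < 0).
  { pose proof (Hmono (- M) 0 ltac:(lra)). fold (F 0) (F (-M)) in H.
    assert (INR n * (0 - - M) >= M) by nra.
    pose proof (Rle_abs (F 0)). unfold M in *. lra. }
  assert (Hhi : 0 < F M).
  { pose proof (Hmono 0 M HM). fold (F 0) (F M) in H.
    assert (INR n * (M - 0) >= M) by nra.
    pose proof (Rle_abs (- F 0)). rewrite Rabs_Ropp in H1. unfold M in *. lra. }
  destruct (IVT F (- M) M HFc ltac:(lra) Hlo Hhi) as [a [_ Ha]].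
  exists (X n g h a).
  assert (HinE : inE n (X n g h a)) by (split; [reflexivity| exact Ha]).
  split.
  - apply weak_iff. split; auto. intros y [Hy0 Hyn].
    apply sum_zero. intros k Hk.
    destruct (Nat.eq_dec k n) as [->|Hne]; [rewrite Hyn; ring|].
    rewrite Hres by lia. ring.
  - intros x' Hx'. apply weak_iff in Hx'. destruct Hx' as [[Hx0 Hxn] Hw].
    assert (Hr : forall j, (1 <= j <= n - 1)%nat -> res n f h x' j = 0).
    { intros j Hj. rewrite <- (Hw (fun k => if Nat.eqb k j then 1 else 0)).
      - symmetry. apply sum_delta. lia.
      - split; cbv beta.
        + destruct (Nat.eqb_spec 0 j); [lia|reflexivity].
        + destruct (Nat.eqb_spec n j); [lia|reflexivity]. }
    set (b := x' 1%nat).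
    assert (Hag : forall k, (S k <= n)%nat ->
      x' k = X n g h b k /\ x' (S k) = X n g h b (S k)).
    { induction k as [|k IH]; intros Hk.
      - split; [exact Hx0| reflexivity].
      - destruct (IH ltac:(lia)) as [E1 E2]. split; auto.
        pose proof (Hr (S k) ltac:(lia)) as R.
        unfold res, Delta in R. replace (S k - 1)%nat with k in R by lia.
        rewrite Hfi in R by lia. rewrite X_SS. unfold hh. rewrite <- E1, <- E2. lra. }
    assert (Hall : forall k, (k <= n)%nat -> x' k = X n g h b k).
    { intros [|k] Hk; [rewrite Hx0; reflexivity|]. apply (Hag k Hk). }
    assert (Hb : b = a).
    { assert (Fb : F b = 0) by (unfold F; rewrite <- Hall by lia; exact Hxn).
      destruct (Rtotal_order b a) as [Hl|[He|Hg]]; auto; exfalso.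
      - pose proof (Hmono b a Hl). fold (F a) (F b) in H.
        assert (INR n * (a - b) > 0) by nra. lra.
      - pose proof (Hmono a b Hg). fold (F a) (F b) in H.
        assert (INR n * (b - a) > 0) by nra. lra. }
    intros k Hk. rewrite Hall by auto. rewrite Hb. reflexivity.
Qed.
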